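(* Consider the fully discrete implicit variable-step BDF2 scheme described in the context and let $\{u^n\}_{n=0}^N$ be its solution. Suppose the time-step ratios satisfy $r_k\le r_s$ for $2\le k\le N$ and the time steps satisfy \[ \tau_n<4\delta\min\Big\{R_L(r_n,r_{n+1}),\ \frac{2+r_2}{1+r_2}\Big\},\qquad 1\le n\le N, \] where $R_L(z,s)=\frac{2+4z-z^{3/2}}{1+z}-\frac{s^{3/2}}{1+s}$ (with $r_1:=0$). Then \[ E^n\le\mathcal{E}^n\le\mathcal{E}^{n-1}\le E^0,\qquad 1\le n\le N, \] where $E^n=\frac{\delta}{2}\|\Delta_hu^n\|^2+\frac14\big\||\nabla_hu^n|^2-1\big\|^2$ for $n\ge0$, $\mathcal{E}^n=E^n+\frac{r_{n+1}^{3/2}}{2(1+r_{n+1})\tau_n}\|\nabla_\tau u^n\|^2$ for $n\ge1$, and $\mathcal E^0=E^0$.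
   Context: Let $L>0$, $\Omega=(0,L)^2$, $M$ a positive integer, $h=L/M$, $x_i=ih$, $y_j=jh$, $\Omega_h=\{(x_i,y_j):1\le i,j\le M\}$, $\bar\Omega_h=\{(x_i,y_j):0\le i,j\le M\}$, and $\mathbb{V}_h$ the space of grid functions on $\bar\Omega_h$ that are $L$-periodic in each direction. For $v\in\mathbb{V}_h$: $\delta_x v_{i+1/2,j}=(v_{i+1,j}-v_{ij})/h$, $\Delta_x v_{ij}=(v_{i+1,j}-v_{i-1,j})/(2h)$, $\delta_x^2 v_{ij}=(\delta_xv_{i+1/2,j}-\delta_xv_{i-1/2,j})/h$, and analogously in $y$; $\Delta_h=\delta_x^2+\delta_y^2$, $\nabla_h v_{ij}=(\Delta_x v_{ij},\Delta_y v_{ij})^T$, and for a vector grid function $\mathbf{g}=(g_1,g_2)$, $\nabla_h\cdot \mathbf g=\Delta_x g_1+\Delta_y g_2$. Inner product $\langle v,w\rangle=h^2\sum_{\mathrm{x}_h\in\Omega_h}v_hw_h$, $\|v\|=\sqrt{\langle v,v\rangle}$; $|\nabla_hu|$ is the pointwise Euclidean norm. Let $f(\mathbf{v})=(|\mathbf v|^2-1)\mathbf v$ and $\delta>0$. Time levels $0=t_0<t_1<\dots<t_N=T$, $\tau_n=t_n-t_{n-1}$, $r_n=\tau_n/\tau_{n-1}$ ($2\le n\le N$); $r_{N+1}\in(0,r_s]$ is an auxiliary ratio used for $n=N$. $\nabla_\tau v^n=v^n-v^{n-1}$. BDF2 kernels: $b_0^{(1)}=2/\tau_1$, and for $n\ge2$,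 $b_0^{(n)}=\frac{1+2r_n}{\tau_n(1+r_n)}$, $b_1^{(n)}=-\frac{r_n^2}{\tau_n(1+r_n)}$, $b_j^{(n)}=0$ for $j\ge2$; $D_2v^n=\sum_{k=1}^n b_{n-k}^{(n)}\nabla_\tau v^k$. The scheme is: $D_2u_h^n+\delta\Delta_h^2u_h^n-\nabla_h\cdot f(\nabla_hu_h^n)=0$ for $\mathrm{x}_h\in\Omega_h$, $1\le n\le N$, with $u_h^0=\varphi_0(\mathrm{x}_h)-\frac{\tau_1}{2}\varphi_1(\mathrm{x}_h)$, $\varphi_1=\nabla\cdot f(\nabla\varphi_0)-\delta\Delta^2\varphi_0$ for given periodic smooth data $\varphi_0\in H^4(\Omega)$. $r_s$ is a fixed constant with $0<r_s<4.864$. *)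

(* Defs.v *)
From mathcomp Require Import all_boot all_order all_algebra.
From mathcomp Require Import reals.
Set Implicit Arguments. Unset Strict Implicit. Unset Printing Implicit Defensive.
Import Order.TTheory GRing.Theory Num.Theory.
Local Open Scope ring_scope.

Section Grid.
Variable R : realType.
Variable M : nat.
Variable h : R.

(* L-periodic grid functions on the M x M periodic grid; the index i : 'I_M
   stands for the residue class of i mod M (so i = 0 represents x_0 = x_M). *)
Definition gridfun := 'I_M -> 'I_M -> R.

Definition sx (i : 'I_M) := ordS i.
Definition px (i : 'I_M) := ord_pred i.

(* forward difference delta_x v_{i+1/2,j} stored at index i *)
Definition dfx (v : gridfun) : gridfun := fun i j => (v (sx i) j - v i j) / h.
Definition dfy (v : gridfun) : gridfun := fun i j => (v i (sx j) - v i j) / h.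
Definition dcx (v : gridfun) : gridfun := fun i j => (v (sx i) j - v (px i) j) / (2 * h).
Definition dcy (v : gridfun) : gridfun := fun i j => (v i (sx j) - v i (px j)) / (2 * h).
Definition d2x (v : gridfun) : gridfun := fun i j => (dfx v i j - dfx v (px i) j) / h.
Definition d2y (v : gridfun) : gridfun := fun i j => (dfy v i j - dfy v i (px j)) / h.
Definition lap (v : gridfun) : gridfun := fun i j => d2x v i j + d2y v i j.
Definition gdiv (g1 g2 : gridfun) : gridfun := fun i j => dcx g1 i j + dcy g2 i j.

Definition fgrad1 (u : gridfun) : gridfun :=
  fun i j => ((dcx u i j) ^+ 2 + (dcy u i j) ^+ 2 - 1) * dcx u i j.
Definition fgrad2 (u : gridfun) : gridfun :=
  fun i j => ((dcx u i j) ^+ 2 + (dcy u i j) ^+ 2 - 1) * dcy u i j.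
Definition gradsq1 (u : gridfun) : gridfun :=
  fun i j => (dcx u i j) ^+ 2 + (dcy u i j) ^+ 2 - 1.

Definition ginner (v w : gridfun) : R := h ^+ 2 * \sum_(i < M) \sum_(j < M) v i j * w i j.
Definition gnorm (v : gridfun) : R := Num.sqrt (ginner v v).

End Grid.

Section Time.
Variable R : realType.

(* z^{3/2} for z >= 0 *)
Definition pow32 (z : R) : R := z * Num.sqrt z.

(* time-step ratios: r_1 := 0, r_n = tau_n / tau_{n-1} for 2 <= n <= N,
   r_{N+1} := rN1 (auxiliary stepratio) *)
Definition stepratio (tau : nat -> R) (N : nat) (rN1 : R) (n : nat) : R :=
  if (n <= 1)%N then 0 else if (n <= N)%N then tau n / tau n.-1 else rN1.

Definition RL (z s : R) : R :=
  (2 + 4 * z - pow32 z) / (1 + z) - pow32 s / (1 + s).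

Definition b0 (tau : nat -> R) (r : nat -> R) (n : nat) : R :=
  if n == 1%N then 2 / tau 1%N else (1 + 2 * r n) / (tau n * (1 + r n)).
Definition b1 (tau : nat -> R) (r : nat -> R) (n : nat) : R :=
  - (r n) ^+ 2 / (tau n * (1 + r n)).

End Time.

Definition D2 (R : realType) (M : nat) (tau r : nat -> R)
    (u : nat -> gridfun R M) (n : nat) : gridfun R M :=
  fun i j =>
    if n == 1%N then b0 tau r 1 * (u 1%N i j - u 0%N i j)
    else b0 tau r n * (u n i j - u n.-1 i j)
         + b1 tau r n * (u n.-1 i j - u n.-2 i j).

Definition Energy (R : realType) (M : nat) (h delta : R) (v : gridfun R M) : R :=
  delta / 2 * (gnorm h (lap h v)) ^+ 2 + 1 / 4 * (gnorm h (gradsq1 h v)) ^+ 2.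

Definition ModEnergy (R : realType) (M : nat) (h delta : R) (tau r : nat -> R)
    (u : nat -> gridfun R M) (n : nat) : R :=
  if n == 0%N then Energy h delta (u 0%N)
  else Energy h delta (u n)
       + pow32 (r n.+1) / (2 * (1 + r n.+1) * tau n)
         * (gnorm h (fun i j => u n i j - u n.-1 i j)) ^+ 2.

(* Main.v *)
Require Import Defs.
From mathcomp Require Import all_boot all_order all_algebra.
From mathcomp Require Import reals ring lra zify.
Import Order.TTheory GRing.Theory Num.Theory.
Local Open Scope ring_scope.
Set Implicit Arguments. Unset Strict Implicit.
Section G.
Variable R : realType.
Variable M : nat.
Variable h : R.
Hypothesis hn0 : h != 0.

Definition Ts (F : 'I_M -> 'I_M -> R) := \sum_(i < M) \sum_(j < M) F i j.

Lemma TsD F G : Ts (fun i j => F i j + G i j) = Ts F + Ts G.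
Proof. rewrite /Ts -big_split /=; apply: eq_bigr => i _; exact: big_split. Qed.
Lemma TsZ c F : Ts (fun i j => c * F i j) = c * Ts F.
Proof. rewrite /Ts mulr_sumr; apply: eq_bigr => i _; by rewrite mulr_sumr. Qed.
Lemma TsN F : Ts (fun i j => - F i j) = - Ts F.
Proof. rewrite /Ts -sumrN; apply: eq_bigr => i _; by rewrite -sumrN. Qed.
Lemma Ts_ext F G : (forall i j, F i j = G i j) -> Ts F = Ts G.
Proof. move=> e; apply: eq_bigr => i _; apply: eq_bigr => j _; exact: e. Qed.
Lemma Ts_le F G : (forall i j, F i j <= G i j) -> Ts F <= Ts G.
Proof. move=> e; apply: ler_sum => i _; apply: ler_sum => j _; exact: e. Qed.
Lemma Ts_ge0 F : (forall i j, 0 <= F i j) -> 0 <= Ts F.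
Proof. move=> e; apply: sumr_ge0 => i _; apply: sumr_ge0 => j _; exact: e. Qed.

Lemma Ts_shx (s : 'I_M -> 'I_M) F : injective s -> Ts (fun i j => F (s i) j) = Ts F.
Proof. by move=> si; rewrite /Ts [RHS](reindex_inj si). Qed.
Lemma Ts_shy (s : 'I_M -> 'I_M) F : injective s -> Ts (fun i j => F i (s j)) = Ts F.
Proof. move=> si; apply: eq_bigr => i _; by rewrite [RHS](reindex_inj si). Qed.

Lemma sxK (i : 'I_M) : px (sx i) = i. Proof. exact: ordSK. Qed.
Lemma pxK (i : 'I_M) : sx (px i) = i. Proof. exact: ord_predK. Qed.
Lemma sx_inj : injective (@sx M). Proof. exact: ordS_inj. Qed.
Lemma px_inj : injective (@px M). Proof. exact: ord_pred_inj. Qed.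

Lemma sbp_d2x A B : Ts (fun i j => d2x h A i j * B i j)
   = - Ts (fun i j => dfx h A i j * dfx h B i j).
Proof.
have e1 : Ts (fun i j => dfx h A (px i) j * B i j) = Ts (fun i j => dfx h A i j * B (sx i) j).
  rewrite -(@Ts_shx (@sx M) (fun i j => dfx h A (px i) j * B i j) sx_inj).
  by apply: Ts_ext => i j; rewrite sxK.
rewrite -TsN.
transitivity (Ts (fun i j => h^-1 * (dfx h A i j * B i j)) - Ts (fun i j => h^-1 * (dfx h A (px i) j * B i j))).
  rewrite -TsN -TsD; apply: Ts_ext => i j; rewrite /d2x; ring.
rewrite !TsZ e1 -mulrBr -TsN -TsD -TsZ; apply: Ts_ext => i j; rewrite /dfx; ring.
Qed.
Lemma sbp_d2y A B : Ts (fun i j => d2y h A i j * B i j)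
   = - Ts (fun i j => dfy h A i j * dfy h B i j).
Proof.
have e1 : Ts (fun i j => dfy h A i (px j) * B i j) = Ts (fun i j => dfy h A i j * B i (sx j)).
  rewrite -(@Ts_shy (@sx M) (fun i j => dfy h A i (px j) * B i j) sx_inj).
  by apply: Ts_ext => i j; rewrite sxK.
rewrite -TsN.
transitivity (Ts (fun i j => h^-1 * (dfy h A i j * B i j)) - Ts (fun i j => h^-1 * (dfy h A i (px j) * B i j))).
  rewrite -TsN -TsD; apply: Ts_ext => i j; rewrite /d2y; ring.
rewrite !TsZ e1 -mulrBr -TsN -TsD -TsZ; apply: Ts_ext => i j; rewrite /dfy; ring.
Qed.
Lemma sbp_lap A B : Ts (fun i j => lap h A i j * B i j)
   = - Ts (fun i j => dfx h A i j * dfx h B i j + dfy h A i j * dfy h B i j).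
Proof.
rewrite TsD opprD -sbp_d2x -sbp_d2y -TsD; apply: Ts_ext => i j; rewrite /lap; ring.
Qed.
Lemma lap_sym A B : Ts (fun i j => lap h A i j * B i j) = Ts (fun i j => A i j * lap h B i j).
Proof.
transitivity (Ts (fun i j => lap h B i j * A i j)); last by apply: Ts_ext => i j; rewrite mulrC.
rewrite !sbp_lap; congr (- _); apply: Ts_ext => i j; ring.
Qed.

Lemma sbp_div g1 g2 v : Ts (fun i j => gdiv h g1 g2 i j * v i j)
  = - Ts (fun i j => g1 i j * dcx h v i j + g2 i j * dcy h v i j).
Proof.
have ex1 : Ts (fun i j => g1 (sx i) j * v i j) = Ts (fun i j => g1 i j * v (px i) j).
  rewrite -(@Ts_shx (@px M) (fun i j => g1 (sx i) j * v i j) px_inj).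
  by apply: Ts_ext => i j; rewrite pxK.
have ex2 : Ts (fun i j => g1 (px i) j * v i j) = Ts (fun i j => g1 i j * v (sx i) j).
  rewrite -(@Ts_shx (@sx M) (fun i j => g1 (px i) j * v i j) sx_inj).
  by apply: Ts_ext => i j; rewrite sxK.
have ey1 : Ts (fun i j => g2 i (sx j) * v i j) = Ts (fun i j => g2 i j * v i (px j)).
  rewrite -(@Ts_shy (@px M) (fun i j => g2 i (sx j) * v i j) px_inj).
  by apply: Ts_ext => i j; rewrite pxK.
have ey2 : Ts (fun i j => g2 i (px j) * v i j) = Ts (fun i j => g2 i j * v i (sx j)).
  rewrite -(@Ts_shy (@sx M) (fun i j => g2 i (px j) * v i j) sx_inj).
  by apply: Ts_ext => i j; rewrite sxK.
set c := (2 * h)^-1.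
transitivity (c * (Ts (fun i j => g1 (sx i) j * v i j) - Ts (fun i j => g1 (px i) j * v i j)
   + Ts (fun i j => g2 i (sx j) * v i j) - Ts (fun i j => g2 i (px j) * v i j))).
  rewrite -!TsN -!TsD -TsZ; apply: Ts_ext => i j; rewrite /gdiv /dcx /dcy -/c; ring.
rewrite ex1 ex2 ey1 ey2 -!TsN -!TsD -TsZ; apply: Ts_ext => i j; rewrite /dcx /dcy -/c; ring.
Qed.

Lemma dcx_le v : Ts (fun i j => dcx h v i j ^+ 2) <= Ts (fun i j => dfx h v i j ^+ 2).
Proof.
have e : forall i j, dcx h v i j = (dfx h v i j + dfx h v (px i) j) / 2.
  move=> i j; rewrite /dcx /dfx pxK. field; exact: hn0.
have s : Ts (fun i j => dfx h v (px i) j ^+ 2) = Ts (fun i j => dfx h v i j ^+ 2).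
  exact: (@Ts_shx (@px M) (fun i j => dfx h v i j ^+ 2) px_inj).
apply: (@le_trans _ _ (Ts (fun i j => 2^-1 * dfx h v i j ^+ 2 + 2^-1 * dfx h v (px i) j ^+ 2))).
  apply: Ts_le => i j; rewrite e; set a := dfx h v i j; set b := dfx h v (px i) j.
  have : 0 <= (a - b)^+2 by apply: sqr_ge0. 
  move=> H; nra.
rewrite TsD !TsZ s; lra.
Qed.
Lemma dcy_le v : Ts (fun i j => dcy h v i j ^+ 2) <= Ts (fun i j => dfy h v i j ^+ 2).
Proof.
have e : forall i j, dcy h v i j = (dfy h v i j + dfy h v i (px j)) / 2.
  move=> i j; rewrite /dcy /dfy pxK. field; exact: hn0.
have s : Ts (fun i j => dfy h v i (px j) ^+ 2) = Ts (fun i j => dfy h v i j ^+ 2).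
  exact: (@Ts_shy (@px M) (fun i j => dfy h v i j ^+ 2) px_inj).
apply: (@le_trans _ _ (Ts (fun i j => 2^-1 * dfy h v i j ^+ 2 + 2^-1 * dfy h v i (px j) ^+ 2))).
  apply: Ts_le => i j; rewrite e; set a := dfy h v i j; set b := dfy h v i (px j).
  have : 0 <= (a - b)^+2 by apply: sqr_ge0. 
  move=> H; nra.
rewrite TsD !TsZ s; lra.
Qed.
End G.

Section K.
Variable R : realType.
Variable M : nat.
Variable h : R.
Hypothesis hn0 : h != 0.
Notation Ts := (@Ts R M).

Lemma Ts0 : Ts (fun _ _ => 0) = 0.
Proof. by rewrite /Ts big1 // => i _; rewrite big1. Qed.

Lemma ptw_nl (a1 a2 b1 b2 : R) :
  4^-1 * (a1^+2 + a2^+2 - 1)^+2 - 4^-1 * (b1^+2 + b2^+2 - 1)^+2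
     - 2^-1 * ((a1 - b1)^+2 + (a2 - b2)^+2) <=
  ((a1^+2 + a2^+2 - 1) * a1) * (a1 - b1) + ((a1^+2 + a2^+2 - 1) * a2) * (a2 - b2).
Proof.
set s := a1^+2 + a2^+2; set t := b1^+2 + b2^+2.
have E : ((s - 1) * a1) * (a1 - b1) + ((s - 1) * a2) * (a2 - b2)
  - (4^-1 * (s - 1)^+2 - 4^-1 * (t - 1)^+2 - 2^-1 * ((a1 - b1)^+2 + (a2 - b2)^+2))
  = 4^-1 * (t - s)^+2 + 2^-1 * s * ((a1 - b1)^+2 + (a2 - b2)^+2).
  by rewrite /s /t; field.
have s0 : 0 <= s by rewrite /s; apply: addr_ge0; apply: sqr_ge0.
have H1 : 0 <= 4^-1 * (t - s)^+2 by apply: mulr_ge0; [lra| apply: sqr_ge0].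
have H2 : 0 <= 2^-1 * s * ((a1 - b1)^+2 + (a2 - b2)^+2).
  apply: mulr_ge0; [apply: mulr_ge0 => //; lra| apply: addr_ge0; apply: sqr_ge0].
rewrite -subr_ge0 E; lra.
Qed.

Lemma ptw_amgm (delta x y : R) : 0 < delta -> - (x * y) <= delta * x^+2 + (4 * delta)^-1 * y^+2.
Proof.
move=> dp.
have E : delta * (x + y / (2 * delta))^+2 = delta * x^+2 + x * y + (4 * delta)^-1 * y^+2.
  field; lra.
have : 0 <= delta * (x + y / (2 * delta))^+2 by apply: mulr_ge0; [lra| apply: sqr_ge0].
rewrite E; lra.
Qed.

Lemma keyK (delta : R) (w w' D : gridfun R M) : 0 < delta ->
  (forall i j, D i j + delta * lap h (lap h w) i j - gdiv h (fgrad1 h w) (fgrad2 h w) i j = 0) ->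
  Ts (fun i j => D i j * (w i j - w' i j))
  + delta / 2 * (Ts (fun i j => lap h w i j ^+ 2) - Ts (fun i j => lap h w' i j ^+ 2))
  + 1 / 4 * (Ts (fun i j => gradsq1 h w i j ^+ 2) - Ts (fun i j => gradsq1 h w' i j ^+ 2))
  <= (8 * delta)^-1 * Ts (fun i j => (w i j - w' i j) ^+ 2).
Proof.
move=> dp sch.
set v := fun i j => w i j - w' i j.
set a := Ts (fun i j => D i j * v i j).
set b := Ts (fun i j => lap h (lap h w) i j * v i j).
set c := Ts (fun i j => gdiv h (fgrad1 h w) (fgrad2 h w) i j * v i j).
set P := Ts (fun i j => lap h w i j ^+ 2).
set Q := Ts (fun i j => lap h w' i j ^+ 2).
set L2 := Ts (fun i j => lap h v i j ^+ 2).
set G1 := Ts (fun i j => gradsq1 h w i j ^+ 2).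
set G2 := Ts (fun i j => gradsq1 h w' i j ^+ 2).
set Cx := Ts (fun i j => dcx h v i j ^+ 2 + dcy h v i j ^+ 2).
set Fx := Ts (fun i j => dfx h v i j * dfx h v i j + dfy h v i j * dfy h v i j).
set X := Ts (fun i j => v i j ^+ 2).
set LV := Ts (fun i j => lap h v i j * v i j).
have S0 : a + delta * b - c = 0.
  rewrite /a /b /c -TsZ -TsN -!TsD -Ts0; apply: Ts_ext => i j.
  by rewrite -[0](mul0r (v i j)) -(sch i j); ring.
have S1 : b = Ts (fun i j => lap h w i j * lap h v i j) by rewrite /b lap_sym.
have lapv : forall i j, lap h v i j = lap h w i j - lap h w' i j.
  by move=> i j; rewrite /lap /d2x /d2y /dfx /dfy /v; ring.
have S2 : b = 2^-1 * (P - Q + L2).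
  rewrite S1 /P /Q /L2 -TsN -!TsD -TsZ; apply: Ts_ext => i j; by rewrite lapv; field.
have dcxv : forall i j, dcx h v i j = dcx h w i j - dcx h w' i j.
  by move=> i j; rewrite /dcx /v; ring.
have dcyv : forall i j, dcy h v i j = dcy h w i j - dcy h w' i j.
  by move=> i j; rewrite /dcy /v; ring.
have S3 : 4^-1 * G1 - 4^-1 * G2 - 2^-1 * Cx <= - c.
  rewrite /c sbp_div opprK /G1 /G2 /Cx -!TsZ -!TsN -!TsD; apply: Ts_le => i j.
  rewrite dcxv dcyv /gradsq1 /fgrad1 /fgrad2; exact: ptw_nl.
have S4a : Cx <= Ts (fun i j => dfx h v i j ^+ 2) + Ts (fun i j => dfy h v i j ^+ 2).
  rewrite /Cx TsD; apply: lerD.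
    exact: dcx_le.
  exact: dcy_le.
have S4b : Fx = - LV by rewrite /LV sbp_lap opprK.
have S4c : Fx = Ts (fun i j => dfx h v i j ^+ 2) + Ts (fun i j => dfy h v i j ^+ 2).
  by rewrite -TsD; apply: Ts_ext => i j; rewrite !expr2.
have S5 : - LV <= delta * L2 + (4 * delta)^-1 * X.
  rewrite /LV /L2 /X -!TsZ -TsN -TsD; apply: Ts_le => i j; exact: ptw_amgm.
have e8 : (8 * delta)^-1 = 2^-1 * (4 * delta)^-1 by field; lra.
rewrite e8 -/X -/a -/P -/Q -/G1 -/G2.
have Hdb : delta * b = delta * 2^-1 * (P - Q + L2) by rewrite S2; ring.
set Y := (4 * delta)^-1 * X.
lra.
Qed.
End K.

Section S.
Variable R : realType.

Lemma ptw_bdf (r v v' : R) : 0 <= r ->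
  2 * r ^+ 2 * (v' * v) <= r * Num.sqrt r * v ^+ 2 + r ^+ 2 * Num.sqrt r * v' ^+ 2.
Proof.
move=> r0; set q := Num.sqrt r.
have q0 : 0 <= q by apply: sqrtr_ge0.
have rq : r = q ^+ 2 by rewrite /q sqr_sqrtr.
rewrite rq -subr_ge0.
have -> : q ^+ 2 * q * v ^+ 2 + (q ^+ 2) ^+ 2 * q * v' ^+ 2 - 2 * (q ^+ 2) ^+ 2 * (v' * v)
  = q ^+ 3 * (v - q * v') ^+ 2 by ring.
by apply: mulr_ge0; [apply: exprn_ge0 | apply: sqr_ge0].
Qed.

Lemma neg_part (delta tau RLv : R) : 0 < delta -> tau < 4 * delta * RLv ->
  tau / (4 * delta) - RLv < 0.
Proof.
move=> dp H.
have -> : tau / (4 * delta) - RLv = (4 * delta)^-1 * (tau - 4 * delta * RLv) by field; lra.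
rewrite pmulr_rlt0; [lra | rewrite invr_gt0; lra].
Qed.

Lemma scalar1 (delta tau s X : R) : 0 < delta -> 0 < tau -> 0 < s -> 0 <= X ->
  tau < 4 * delta * RL 0 s ->
  (8 * delta)^-1 * X - 2 / tau * X + pow32 s / (2 * (1 + s) * tau) * X <= 0.
Proof.
move=> dp tp sp X0 H.
have N : tau / (4 * delta) - RL 0 s < 0 by exact: neg_part.
have -> : (8 * delta)^-1 * X - 2 / tau * X + pow32 s / (2 * (1 + s) * tau) * X
  = (2 * tau)^-1 * ((tau / (4 * delta) - RL 0 s) - 2) * X.
  rewrite /RL /pow32 sqrtr0; field; apply/and3P; split; lra.
apply: mulr_le0_ge0 => //; apply: mulr_ge0_le0; [rewrite invr_ge0; lra | lra].
Qed.

Lemma scalar2 (delta tau tau' s X Y Z : R) : 0 < delta -> 0 < tau -> 0 < tau' -> 0 < s ->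
  0 <= X ->
  let r := tau / tau' in
  2 * r ^+ 2 * Z <= r * Num.sqrt r * X + r ^+ 2 * Num.sqrt r * Y ->
  tau < 4 * delta * RL r s ->
  (8 * delta)^-1 * X - ((1 + 2 * r) / (tau * (1 + r)) * X + - r ^+ 2 / (tau * (1 + r)) * Z)
  + pow32 s / (2 * (1 + s) * tau) * X - pow32 r / (2 * (1 + r) * tau') * Y <= 0.
Proof.
move=> dp tp tp' sp X0 r H1 H.
have N : tau / (4 * delta) - RL r s < 0 by exact: neg_part.
have r0 : 0 < r by rewrite /r divr_gt0.
set k := (2 * tau * (1 + r))^-1.
have k0 : 0 <= k by rewrite /k invr_ge0; nra.
have H2 := ler_wpM2l k0 H1.
have -> : (8 * delta)^-1 * X - ((1 + 2 * r) / (tau * (1 + r)) * X + - r ^+ 2 / (tau * (1 + r)) * Z)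
  + pow32 s / (2 * (1 + s) * tau) * X - pow32 r / (2 * (1 + r) * tau') * Y
  = (2 * tau)^-1 * (tau / (4 * delta) - RL r s) * X
    + (k * (2 * r ^+ 2 * Z) - k * (r * Num.sqrt r * X + r ^+ 2 * Num.sqrt r * Y)).
  rewrite /k /RL /pow32 /r; field.
  apply/and5P; split; lra.
have A : (2 * tau)^-1 * (tau / (4 * delta) - RL r s) * X <= 0.
  apply: mulr_le0_ge0 => //; apply: mulr_ge0_le0; [rewrite invr_ge0; lra | lra].
lra.
Qed.
End S.

Unset Implicit Arguments. Set Strict Implicit.
Lemma gnorm2 (R : realType) (M : nat) (h : R) (F : 'I_M -> 'I_M -> R) :
  Defs.gnorm h F ^+ 2 = h ^+ 2 * Ts (fun i j => F i j ^+ 2).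
Proof.
rewrite /Defs.gnorm.
have -> : ginner h F F = h ^+ 2 * Ts (fun i j => F i j ^+ 2).
  by rewrite /ginner /Ts; congr (_ * _); apply: eq_bigr => i _; apply: eq_bigr => j _; rewrite expr2.
rewrite sqr_sqrtr //; apply: mulr_ge0; first exact: sqr_ge0.
by apply: Ts_ge0 => i j; apply: sqr_ge0.
Qed.

Theorem theorem2p2 (R : realType) (L delta rs : R) (M N : nat)
    (tau : nat -> R) (rN1 : R) (u : nat -> 'I_M -> 'I_M -> R) :
  0 < L -> (0 < M)%N -> 0 < delta ->
  0 < rs -> rs < 4864 / 1000 ->
  (forall n, (1 <= n <= N)%N -> 0 < tau n) ->
  0 < rN1 -> rN1 <= rs ->
  let h := L / M%:R in
  let r := stepratio tau N rN1 in
  (* the fully discrete variable-step BDF2 scheme *)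
  (forall n, (1 <= n <= N)%N -> forall i j : 'I_M,
     D2 tau r u n i j + delta * lap h (lap h (u n)) i j
       - gdiv h (fgrad1 h (u n)) (fgrad2 h (u n)) i j = 0) ->
  (* step-stepratio restriction *)
  (forall k, (2 <= k <= N)%N -> r k <= rs) ->
  (* time-step restriction *)
  (forall n, (1 <= n <= N)%N ->
     tau n < 4 * delta * Num.min (RL (r n) (r n.+1)) ((2 + r 2%N) / (1 + r 2%N))) ->
  forall n, (1 <= n <= N)%N ->
    Energy h delta (u n) <= ModEnergy h delta tau r u n /\
    ModEnergy h delta tau r u n <= ModEnergy h delta tau r u n.-1 /\
    ModEnergy h delta tau r u n.-1 <= Energy h delta (u 0%N).
Proof.
move=> HL HM Hd _ _ Htau HN1 _ h r Hsch _ Htn.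
have hp : 0 < h by rewrite /h divr_gt0 // ltr0n.
have hn0 : h != 0 by lra.
have Hrs : forall n, (1 <= n <= N)%N -> 0 < r n.+1.
  move=> n /andP [n1 nN]; rewrite /r /stepratio.
  have -> : (n.+1 <= 1)%N = false by case: n n1 {nN}.
  case: ifP => // nN1 /=; apply: divr_gt0; apply: Htau; move: n1 nN1; clear; lia.
have HRL : forall n, (1 <= n <= N)%N -> tau n < 4 * delta * RL (r n) (r n.+1).
  move=> n Hn; apply: (lt_le_trans (Htn n Hn)); apply: ler_wpM2l; first lra.
  by rewrite ge_min lexx.
have step : forall n, (1 <= n <= N)%N ->
    Energy h delta (u n) <= ModEnergy h delta tau r u n /\
    ModEnergy h delta tau r u n <= ModEnergy h delta tau r u n.-1.
  move=> n Hn.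
  have n0 : (n != 0)%N by case/andP: Hn; case: n.
  have tp := Htau n Hn.
  have sp := Hrs n Hn.
  have Kn := @keyK R M h hn0 delta (u n) (u n.-1) (D2 tau r u n) Hd (Hsch n Hn).
  set X := Ts (fun i j => (u n i j - u n.-1 i j) ^+ 2) in Kn.
  have X0 : 0 <= X by apply: Ts_ge0 => i j; apply: sqr_ge0.
  set A := pow32 (r n.+1) / (2 * (1 + r n.+1) * tau n).
  have A0 : 0 <= A.
    rewrite /A /pow32; apply: divr_ge0; first by apply: mulr_ge0; [lra | apply: sqrtr_ge0].
    apply: mulr_ge0; lra.
  have EM : ModEnergy h delta tau r u n = Energy h delta (u n) + A * (h ^+ 2 * X).
    by rewrite /ModEnergy (negbTE n0) gnorm2.
  split.
    rewrite EM; have : 0 <= A * (h ^+ 2 * X) by apply: mulr_ge0 => //; apply: mulr_ge0 => //; apply: sqr_ge0.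
    lra.
  have EE : forall v : gridfun R M, Energy h delta v = h ^+ 2 * (delta / 2 * Ts (fun i j => lap h v i j ^+ 2)
      + 1 / 4 * Ts (fun i j => gradsq1 h v i j ^+ 2)).
    by move=> v; rewrite /Energy !gnorm2; ring.
  have h20 : 0 <= h ^+ 2 by apply: sqr_ge0.
  rewrite EM.
  case: (eqVneq n 1%N) => [n1 | n1].
    subst n.
    have Ea : Ts (fun i j => D2 tau r u 1 i j * (u 1%N i j - u 0%N i j)) = 2 / tau 1%N * X.
      rewrite /X -TsZ; apply: Ts_ext => i j; rewrite /D2 /b0 /=; ring.
    rewrite Ea in Kn.
    have r1 : r 1%N = 0 by rewrite /r /stepratio.
    have H1 := HRL 1%N Hn; rewrite r1 in H1.
    have S1 := scalar1 Hd tp sp X0 H1.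
    rewrite -/A in S1.
    have M1 : h ^+ 2 * (delta / 2 * (Ts (fun i j => lap h (u 1%N) i j ^+ 2) - Ts (fun i j => lap h (u 0%N) i j ^+ 2))
       + 1 / 4 * (Ts (fun i j => gradsq1 h (u 1%N) i j ^+ 2) - Ts (fun i j => gradsq1 h (u 0%N) i j ^+ 2))
       + A * X) <= 0.
      apply: mulr_ge0_le0 => //; lra.
    rewrite /ModEnergy /= !EE; lra.
  have n2 : (2 <= n <= N)%N by move: Hn n1; clear; lia.
  have Hn1 : (1 <= n.-1 <= N)%N by move: n2; clear; lia.
  have tp' := Htau n.-1 Hn1.
  have rn : r n = tau n / tau n.-1.
    rewrite /r /stepratio; case/andP: n2 => n2a n2b.
    have -> : (n <= 1)%N = false by move: n2a; clear; lia.
    by rewrite n2b.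
  set Y := Ts (fun i j => (u n.-1 i j - u n.-2 i j) ^+ 2).
  set Z := Ts (fun i j => (u n.-1 i j - u n.-2 i j) * (u n i j - u n.-1 i j)).
  have Ea : Ts (fun i j => D2 tau r u n i j * (u n i j - u n.-1 i j))
      = (1 + 2 * r n) / (tau n * (1 + r n)) * X + - r n ^+ 2 / (tau n * (1 + r n)) * Z.
    rewrite /X /Z -!TsZ -TsD; apply: Ts_ext => i j; rewrite /D2 /b0 /b1 (negbTE n1); ring.
  rewrite Ea in Kn.
  have rpos : 0 <= r n by rewrite rn; apply: divr_ge0; lra.
  have Hb : 2 * r n ^+ 2 * Z <= r n * Num.sqrt (r n) * X + r n ^+ 2 * Num.sqrt (r n) * Y.
    rewrite /X /Y /Z -!TsZ -TsD; apply: Ts_le => i j; exact: ptw_bdf.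
  have H1 := HRL n Hn.
  rewrite rn in Hb H1.
  have S2 := scalar2 Hd tp tp' sp X0 Hb H1.
  rewrite -rn -/A in S2.
  set B := pow32 (r n) / (2 * (1 + r n) * tau n.-1) in S2.
  have M1 : h ^+ 2 * (delta / 2 * (Ts (fun i j => lap h (u n) i j ^+ 2) - Ts (fun i j => lap h (u n.-1) i j ^+ 2))
       + 1 / 4 * (Ts (fun i j => gradsq1 h (u n) i j ^+ 2) - Ts (fun i j => gradsq1 h (u n.-1) i j ^+ 2))
       + A * X - B * Y) <= 0.
    apply: mulr_ge0_le0 => //; lra.
  have EM' : ModEnergy h delta tau r u n.-1 = Energy h delta (u n.-1) + B * (h ^+ 2 * Y).
    have n10 : (n.-1 != 0)%N by move: n2; clear; lia.
    rewrite /ModEnergy (negbTE n10) gnorm2 prednK //; move: n2; clear; lia.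
  rewrite EM' !EE; lra.
have chain : forall m, (m <= N)%N -> ModEnergy h delta tau r u m <= Energy h delta (u 0%N).
  elim=> [|m IH] mN; first by rewrite /ModEnergy eqxx.
  have Hm : (1 <= m.+1 <= N)%N by move: mN; clear; lia.
  have [_ s2] := step _ Hm.
  apply: (le_trans s2); apply: IH; move: mN; clear; lia.
move=> n Hn; have [s1 s2] := step n Hn; split => //; split => //.
apply: chain; move: Hn; clear; lia.
Qed.
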